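(* For nonzero complex parameters $g,a$ let $T(g,a)$ be the infinite matrix indexed by $i,j\in\mathbb{Z}_{\ge 0}$ with entries $$T(g,a)_{i,j}=(ag)^{i+j}\sum_{k=0}^{\min(i,j)}\binom{i}{k}\binom{j}{k}a^{-2k}.$$ Let $(g,a)$ and $(g',a')$ be two such parameter pairs, with $|g|,|g'|$ small enough that the matrix products $T(g,a)T(g',a')$ and $T(g',a')T(g,a)$ (defined by $(XY)_{i,j}=\sum_{k\ge0}X_{i,k}Y_{k,j}$) converge absolutely entrywise. Then $T(g,a)$ and $T(g',a')$ commute if and only if $\varphi(g,a)=\varphi(g',a')$, where $$\varphi(g,a)=\frac{1-g^2(1-a^2)}{a g}.$$
   Context: $T(g,a)$ is the transfer matrix of the model of 1+1-dimensional Lorentzian triangulations, with weight $g$ per triangle and weight $a$ per pair of consecutive triangles in a time slice pointing in the same direction; the indices $i,j$ count the up- and down-pointing triangles of a time slice. *)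

(* Defs.v *)
From Stdlib Require Import Reals.
Open Scope R_scope.

Definition Cx : Type := (R * R)%type.
Definition Cx_of_R (x : R) : Cx := (x, 0).
Definition Cx0 : Cx := (0, 0).
Definition Cx1 : Cx := (1, 0).
Definition Cxadd (z w : Cx) : Cx := (fst z + fst w, snd z + snd w).
Definition Cxopp (z : Cx) : Cx := (- fst z, - snd z).
Definition Cxsub (z w : Cx) : Cx := Cxadd z (Cxopp w).
Definition Cxmul (z w : Cx) : Cx :=
  (fst z * fst w - snd z * snd w, fst z * snd w + snd z * fst w).
Definition Cxinv (z : Cx) : Cx :=
  (fst z / (fst z ^ 2 + snd z ^ 2), - snd z / (fst z ^ 2 + snd z ^ 2)).
Definition Cxdiv (z w : Cx) : Cx := Cxmul z (Cxinv w).
Fixpoint Cxpow (z : Cx) (n : nat) : Cx :=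
  match n with O => Cx1 | S m => Cxmul z (Cxpow z m) end.
Definition Cxmod (z : Cx) : R := sqrt (fst z ^ 2 + snd z ^ 2).

(* Finite sum f 0 + ... + f n  (n+1 terms). *)
Fixpoint Cxsum (f : nat -> Cx) (n : nat) : Cx :=
  match n with O => f O | S m => Cxadd (Cxsum f m) (f (S m)) end.

Definition Cxseries_sum_to (u : nat -> Cx) (l : Cx) : Prop :=
  Un_cv (fun N => fst (Cxsum u N)) (fst l) /\
  Un_cv (fun N => snd (Cxsum u N)) (snd l).

Definition Cxseries_abs_conv (u : nat -> Cx) : Prop :=
  exists s : R, Un_cv (fun N => sum_f_R0 (fun k => Cxmod (u k)) N) s.

Definition Imat : Type := nat -> nat -> Cx.

Definition prod_terms (X Y : Imat) (i j : nat) : nat -> Cx :=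
  fun k => Cxmul (X i k) (Y k j).

Definition product_abs_conv (X Y : Imat) : Prop :=
  forall i j : nat, Cxseries_abs_conv (prod_terms X Y i j).

Definition imat_commute (X Y : Imat) : Prop :=
  forall i j : nat, exists l : Cx,
    Cxseries_sum_to (prod_terms X Y i j) l /\
    Cxseries_sum_to (prod_terms Y X i j) l.

Definition Tmat (g a : Cx) : Imat :=
  fun i j =>
    Cxmul (Cxpow (Cxmul a g) (i + j))
      (Cxsum (fun k => Cxmul (Cx_of_R (Binomial.C i k * Binomial.C j k))
                             (Cxpow (Cxinv a) (2 * k)))
             (Nat.min i j)).

Definition phi (g a : Cx) : Cx :=
  Cxdiv (Cxsub Cx1 (Cxmul (Cxpow g 2) (Cxsub Cx1 (Cxpow a 2))))
        (Cxmul a g).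

(* Main.v *)
Require Import Defs.
From Stdlib Require Import Reals.
Open Scope R_scope.
From Coquelicot Require Import Coquelicot.
From Stdlib Require Import Lia ClassicalEpsilon Factorial.

Lemma e11 : forall z n, Cxpow z n = Cpow z n.
Proof. intros z n; induction n; simpl; [reflexivity|]. rewrite IHn; reflexivity. Qed.

Open Scope C_scope.

Fixpoint CS (f : nat -> C) (n : nat) : C :=
  match n with O => f O | S m => CS f m + f (S m) end.
Lemma CS_eq : forall f n, Cxsum f n = CS f n.
Proof. intros f n; induction n; simpl; [reflexivity|]. rewrite IHn; reflexivity. Qed.

Lemma CS_ext : forall f g n, (forall k, (k <= n)%nat -> f k = g k) -> CS f n = CS g n.
Proof. intros f g n H; induction n; simpl. apply H; lia.
  rewrite IHn by (intros; apply H; lia). rewrite H by lia; reflexivity. Qed.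

Lemma CS_shift : forall f n, CS f (S n) = f O + CS (fun k => f (S k)) n.
Proof. intros f n; induction n. simpl. reflexivity.
  change (CS f (S (S n))) with (CS f (S n) + f (S (S n))). rewrite IHn. simpl. ring. Qed.

Lemma CS_zero_ext : forall f n d, (forall k, (n < k)%nat -> f k = RtoC 0) -> CS f (n + d)%nat = CS f n.
Proof. intros f n d H; induction d. rewrite Nat.add_0_r; reflexivity.
  rewrite Nat.add_succ_r. simpl. rewrite IHd, H by lia. ring. Qed.

Lemma CS_comb : forall f g h k l c n,
  CS f n - CS g n - CS h n + CS k n - c * CS l n
  = CS (fun m => f m - g m - h m + k m - c * l m) n.
Proof. intros; induction n; simpl. reflexivity. rewrite <- IHn. ring. Qed.

Fixpoint bin (n k : nat) : nat :=
  match n, k with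
  | _, O => 1%nat
  | O, S _ => O
  | S n', S k' => (bin n' k' + bin n' (S k'))%nat
  end.

Lemma bin_big : forall n k, (n < k)%nat -> bin n k = O.
Proof. induction n; intros k H; destruct k; simpl; try lia; auto.
  rewrite !IHn by lia; reflexivity. Qed.

Lemma bin_diag : forall n, bin n n = 1%nat.
Proof. induction n; simpl; auto. rewrite IHn, bin_big by lia; reflexivity. Qed.

Lemma Cnn : forall n, Binomial.C n n = 1%R.
Proof. intro n. unfold Binomial.C. rewrite Nat.sub_diag. simpl (fact 0). rewrite (Rmult_comm _ (INR 1)).
  change (INR 1) with 1%R. rewrite Rmult_1_l. unfold Rdiv. apply Rinv_r. apply not_0_INR, fact_neq_0. Qed.
Lemma Cn0 : forall n, Binomial.C n 0 = 1%R.
Proof. intro n. unfold Binomial.C. rewrite Nat.sub_0_r. simpl (fact 0).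
  change (INR 1) with 1%R. rewrite Rmult_1_l. unfold Rdiv. apply Rinv_r. apply not_0_INR, fact_neq_0. Qed.

Lemma C_bin : forall n k, (k <= n)%nat -> Binomial.C n k = INR (bin n k).
Proof. induction n; intros k H.
  - assert (k = O) by lia; subst. rewrite Cn0. reflexivity.
  - destruct k. rewrite Cn0. reflexivity.
    destruct (Nat.eq_dec k n). subst. rewrite bin_diag, Cnn. reflexivity.
    rewrite <- pascal by lia. simpl bin. rewrite plus_INR, !IHn by lia. reflexivity.
Qed.

Lemma bin0 : forall n, bin n 0 = 1%nat. Proof. destruct n; reflexivity. Qed.

Lemma aux5 : forall q1 q2 q3 q4 q5 v, q4 = q5 -> q1 - q2 - q3 + q4 - v*q5 = RtoC 0 ->
  q1 = q2 + q3 + (v - RtoC 1)*q4.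
Proof. intros q1 q2 q3 q4 q5 v E H; subst.
  transitivity (q1 - q2 - q3 + q5 - v*q5 + (q2 + q3 + (v-1)*q5)); [ring | rewrite H; ring]. Qed.

Definition Q (N i k : nat) (v : C) : C :=
  CS (fun m => RtoC (INR (bin i m)) * RtoC (INR (bin k m)) * v ^ m) N.

Lemma Q_ext : forall N i k v, (Nat.min i k <= N)%nat -> Q N i k v = Q (Nat.min i k) i k v.
Proof. intros N i k v H. unfold Q. replace N with (Nat.min i k + (N - Nat.min i k))%nat by lia.
  apply CS_zero_ext. intros m Hm. destruct (Nat.min_spec i k) as [[_ E]|[_ E]]; rewrite E in Hm.
  rewrite (bin_big i m) by lia. simpl. ring. rewrite (bin_big k m) by lia. simpl. ring. Qed.

Lemma Q_rec : forall i k v N, (S i + S k <= N)%nat ->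
  Q (S N) (S i) (S k) v = Q (S N) i (S k) v + Q (S N) (S i) k v + (v - 1) * Q (S N) i k v.
Proof. intros i k v N H.
  assert (E : Q (S N) i k v = Q N i k v).
  { rewrite Q_ext by lia. rewrite (Q_ext N) by lia. reflexivity. }
  apply (aux5 _ _ _ _ (Q N i k v)); [exact E|].
  unfold Q at 1 2 3 4. rewrite !CS_shift. unfold Q.
  rewrite !bin0. simpl (bin (S _) (S _)). simpl Cpow at 1 2 3 4.
  match goal with |- ?a + ?A - (?b + ?B) - (?c + ?C') + (?d + ?D) - ?e * ?E = _ =>
    transitivity (A - B - C' + D - e * E) ; [ring|] end.
  rewrite CS_comb.
  rewrite (CS_ext _ (fun _ => RtoC 0)). clear. induction N; simpl; auto. rewrite IHN. unfold RtoC; apply injective_projections; simpl; ring.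
  intros m _. simpl bin. rewrite !plus_INR, !RtoC_plus. simpl Cpow. ring.
Qed.

Lemma T_form : forall g a i k,
  Tmat g a i k = (a*g)^(i+k) * Q (Nat.min i k) i k (/a * /a).
Proof. intros. unfold Tmat. change Cxmul with Cmult; change Cx_of_R with RtoC; change Cxinv with Cinv.
  rewrite e11, CS_eq. f_equal. unfold Q. apply CS_ext; intros m Hm.
  rewrite !C_bin by lia. rewrite RtoC_mult, e11, Cpow_mult_r. simpl (Cpow (/a) 2). f_equal. f_equal. ring. Qed.

Ltac toC := match goal with |- @eq Cx ?x ?y => change (@eq C x y) end.

Section TR.
Variables g a : C.
Let al := a * g.
Let v := /a * /a.
Let T := Tmat g a.

Lemma T00 : T O O = RtoC 1.
Proof. unfold T; rewrite T_form. change (Nat.min O O) with O; change (O+O)%nat with O.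
  unfold Q, CS. rewrite bin0. simpl Cpow. change (INR 1) with 1%R. toC; ring. Qed.
Lemma TS0 : forall i, T (S i) O = al * T i O.
Proof. intros; unfold T; rewrite !T_form. rewrite !Nat.min_0_r. unfold Q, CS. rewrite !Nat.add_0_r, !bin0.
  simpl Cpow. change (INR 1) with 1%R. unfold al. toC; ring. Qed.
Lemma T0S : forall k, T O (S k) = al * T O k.
Proof. intros; unfold T; rewrite !T_form. simpl Nat.min. unfold Q, CS. rewrite !bin0.
  simpl Cpow. change (INR 1) with 1%R. unfold al. toC; ring. Qed.
Lemma TSS : forall i k, T (S i) (S k) = al * T i (S k) + al * T (S i) k + (al*al*(v - RtoC 1)) * T i k.
Proof. intros; unfold T; rewrite !T_form.
  rewrite <- (Q_ext (S (S i + S k)) (S i) (S k)) by lia.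
  rewrite <- (Q_ext (S (S i + S k)) i (S k)) by lia.
  rewrite <- (Q_ext (S (S i + S k)) (S i) k) by lia.
  rewrite <- (Q_ext (S (S i + S k)) i k) by lia.
  rewrite Q_rec by lia.
  replace (S i + S k)%nat with (S (S (i+k))) by lia.
  replace (i + S k)%nat with (S (i+k)) by lia. replace (S i + k)%nat with (S (i+k)) by lia.
  simpl Cpow. fold v. unfold al. toC. generalize (Cpow (a*g) (i+k)); intro P. ring. Qed.
End TR.

Lemma C10 : RtoC 1 <> RtoC 0.
Proof. intro H. apply (f_equal fst) in H. simpl in H. apply R1_neq_R0; exact H. Qed.

Lemma Cmul_cancel : forall c x, c <> RtoC 0 -> c * x = RtoC 0 -> x = RtoC 0.
Proof. intros c x Hc H. transitivity (/c * c * x). rewrite Cinv_l by exact Hc. ring.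
  rewrite <- Cmult_assoc, H. ring. Qed.

Lemma Cmul_neq0 : forall x y, x <> RtoC 0 -> y <> RtoC 0 -> x * y <> RtoC 0.
Proof. intros x y Hx Hy H. apply Hy. exact (Cmul_cancel x y Hx H). Qed.

Lemma Csub_eq : forall x y, x - y = RtoC 0 -> x = y.
Proof. intros x y H. transitivity (x - y + y). ring. rewrite H. ring. Qed.

Lemma Cmul_reg : forall c x y, c <> RtoC 0 -> c * x = c * y -> x = y.
Proof. intros c x y Hc H. apply Csub_eq. apply (Cmul_cancel c). exact Hc.
  transitivity (c*x - c*y). ring. rewrite H. ring. Qed.

Lemma lc2 : forall L R x1 y1 x2 y2 k1 k2 : C, x1 = y1 -> x2 = y2 ->
  L - R = k1*(x1-y1) + k2*(x2-y2) -> L = R.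
Proof. intros. subst. apply Csub_eq. rewrite H1. ring. Qed.
Lemma lc4 : forall L R x1 y1 x2 y2 x3 y3 x4 y4 k1 k2 k3 k4 : C, x1 = y1 -> x2 = y2 -> x3 = y3 -> x4 = y4 ->
  L - R = k1*(x1-y1) + k2*(x2-y2) + k3*(x3-y3) + k4*(x4-y4) -> L = R.
Proof. intros. subst. apply Csub_eq. rewrite H3. ring. Qed.

Definition sto (u : nat -> C) (l : C) : Prop :=
  Un_cv (fun N => fst (CS u N)) (fst l) /\ Un_cv (fun N => snd (CS u N)) (snd l).

Lemma Un_cv_ext : forall f g l, (forall n, f n = g n) -> Un_cv f l -> Un_cv g l.
Proof. intros f g l E H eps He. destruct (H eps He) as [N HN]. exists N. intros n Hn.
  rewrite <- E. apply HN, Hn. Qed.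

Lemma Un_cv_const : forall c, Un_cv (fun _ => c) c.
Proof. intros c eps He. exists O. intros. unfold Rdist. rewrite Rminus_diag, Rabs_R0. exact He. Qed.

Lemma sto_iff : forall u l, Cxseries_sum_to u l <-> sto u l.
Proof. intros u l; unfold Cxseries_sum_to, sto; split; intros [H1 H2]; split;
  (eapply Un_cv_ext; [|eassumption]); intro n; rewrite CS_eq; reflexivity. Qed.

Lemma sto_unique : forall u l l', sto u l -> sto u l' -> l = l'.
Proof. intros u l l' [H1 H2] [H3 H4]. apply injective_projections.
  eapply UL_sequence; eassumption. eapply UL_sequence; eassumption. Qed.

Lemma CS_add : forall u v N, CS (fun k => u k + v k) N = CS u N + CS v N.
Proof. intros; induction N; simpl. reflexivity. rewrite IHN. ring. Qed.
Lemma CS_scal : forall c u N, CS (fun k => c * u k) N = c * CS u N.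
Proof. intros; induction N; simpl. reflexivity. rewrite IHN. ring. Qed.

Lemma sto_ext : forall u v l, (forall k, u k = v k) -> sto u l -> sto v l.
Proof. intros u v l E [H1 H2]. assert (F : forall n, CS u n = CS v n) by (intro; apply CS_ext; intros; apply E).
  split; [apply Un_cv_ext with (f := fun n => fst (CS u n)) | apply Un_cv_ext with (f := fun n => snd (CS u n))];
  auto; intro n; rewrite F; reflexivity. Qed.

Lemma sto_add : forall u v l m, sto u l -> sto v m -> sto (fun k => u k + v k) (l + m).
Proof. intros u v l m [H1 H2] [H3 H4]. split.
  - eapply Un_cv_ext; [|apply (CV_plus _ _ _ _ H1 H3)]. intro n. rewrite CS_add. reflexivity.
  - eapply Un_cv_ext; [|apply (CV_plus _ _ _ _ H2 H4)]. intro n. rewrite CS_add. reflexivity.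
Qed.

Lemma sto_scal : forall c u l, sto u l -> sto (fun k => c * u k) (c * l).
Proof. intros c u l [H1 H2]. split.
  - eapply Un_cv_ext; [|apply (CV_minus _ _ _ _ (CV_mult _ _ _ _ (Un_cv_const (fst c)) H1)
                                           (CV_mult _ _ _ _ (Un_cv_const (snd c)) H2))].
    intro n. rewrite CS_scal. reflexivity.
  - eapply Un_cv_ext; [|apply (CV_plus _ _ _ _ (CV_mult _ _ _ _ (Un_cv_const (fst c)) H2)
                                           (CV_mult _ _ _ _ (Un_cv_const (snd c)) H1))].
    intro n. rewrite CS_scal. reflexivity.
Qed.

Lemma sto_shift : forall c u l, sto u l ->
  sto (fun k => match k with O => c | S k' => u k' end) (c + l).
Proof. intros c u l [H1 H2]. split.
  - apply (CV_shift _ 1). eapply Un_cv_ext; [|apply (CV_plus _ _ _ _ (Un_cv_const (fst c)) H1)].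
    intro n. rewrite Nat.add_1_r, CS_shift. reflexivity.
  - apply (CV_shift _ 1). eapply Un_cv_ext; [|apply (CV_plus _ _ _ _ (Un_cv_const (snd c)) H2)].
    intro n. rewrite Nat.add_1_r, CS_shift. reflexivity.
Qed.

Lemma fst_CS : forall u N, fst (CS u N) = sum_f_R0 (fun k => fst (u k)) N.
Proof. intros; induction N; simpl; [reflexivity|]. rewrite IHN; reflexivity. Qed.
Lemma snd_CS : forall u N, snd (CS u N) = sum_f_R0 (fun k => snd (u k)) N.
Proof. intros; induction N; simpl; [reflexivity|]. rewrite IHN; reflexivity. Qed.

Lemma real_abs_conv : forall (f : nat -> R) (m : nat -> R) s,
  (forall k, Rabs (f k) <= m k) -> Un_cv (fun N => sum_f_R0 m N) s ->
  exists l, Un_cv (fun N => sum_f_R0 f N) l.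
Proof. intros f m s Hb Hs.
  assert (X : {l | Un_cv (fun N => sum_f_R0 (fun k => Rabs (f k)) N) l}).
  { apply (Rseries_CV_comp _ m). intro n; split; [apply Rabs_pos|apply Hb]. exists s; exact Hs. }
  apply cv_cauchy_1, cauchy_abs, cv_cauchy_2 in X.
  destruct X as [l Hl]. exists l. exact Hl.
Qed.

Lemma abs_sto : forall u, Cxseries_abs_conv u -> exists l, sto u l.
Proof. intros u [s Hs].
  destruct (real_abs_conv (fun k => fst (u k)) (fun k => Cxmod (u k)) s) as [l1 H1]; auto.
  { intro k. change Cxmod with Cmod. eapply Rle_trans; [apply Rmax_l|apply Rmax_Cmod]. }
  destruct (real_abs_conv (fun k => snd (u k)) (fun k => Cxmod (u k)) s) as [l2 H2]; auto.
  { intro k. change Cxmod with Cmod. eapply Rle_trans; [apply Rmax_r|apply Rmax_Cmod]. }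
  exists (l1, l2). split; simpl.
  - apply Un_cv_ext with (f := fun N => sum_f_R0 (fun k => fst (u k)) N); auto. intro; rewrite fst_CS; reflexivity.
  - apply Un_cv_ext with (f := fun N => sum_f_R0 (fun k => snd (u k)) N); auto. intro; rewrite snd_CS; reflexivity.
Qed.

Section Gen.
Variables a1 b1 a2 b2 : C.
Variables T1 T2 : nat -> nat -> C.
Hypotheses (H100 : T1 O O = RtoC 1) (H1S0 : forall i, T1 (S i) O = a1 * T1 i O)
  (H10S : forall k, T1 O (S k) = a1 * T1 O k)
  (H1SS : forall i k, T1 (S i) (S k) = a1 * T1 i (S k) + a1 * T1 (S i) k + b1 * T1 i k).
Hypotheses (H200 : T2 O O = RtoC 1) (H2S0 : forall i, T2 (S i) O = a2 * T2 i O)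
  (H20S : forall k, T2 O (S k) = a2 * T2 O k)
  (H2SS : forall i k, T2 (S i) (S k) = a2 * T2 i (S k) + a2 * T2 (S i) k + b2 * T2 i k).
Variable Sm : nat -> nat -> C.
Hypothesis HS : forall i j, sto (fun k => T1 i k * T2 k j) (Sm i j).

Fixpoint U (i j : nat) : C :=
  match j with O => a2 * Sm i O | S j' => a2 * Sm i (S j') + a2 * U i j' + b2 * Sm i j' end.

Lemma HU : forall i j, sto (fun k => T1 i k * T2 (S k) j) (U i j).
Proof. intros i j; induction j; simpl U.
  - eapply sto_ext; [|apply sto_scal, HS]. intro k; simpl. rewrite H2S0. ring.
  - eapply sto_ext; [|apply sto_add; [apply sto_add; [apply sto_scal, HS|apply sto_scal, IHj]|apply sto_scal, HS]].
    intro k; simpl. rewrite H2SS. ring.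
Qed.

Lemma E0 : forall j, Sm O j = T2 O j + a1 * U O j.
Proof. intro j. eapply sto_unique; [apply HS|].
  eapply sto_ext; [|apply sto_shift, sto_scal, HU]. intros [|k]; simpl.
  rewrite H100; ring. rewrite H10S; ring. Qed.

Lemma ES : forall i j, Sm (S i) j = a1 * Sm i j + (RtoC 0 + (a1 * U (S i) j + b1 * U i j)).
Proof. intros i j. eapply sto_unique; [apply HS|].
  eapply sto_ext; [|apply sto_add; [apply sto_scal, HS| apply sto_shift, sto_add; apply sto_scal, HU]].
  intros [|k]; simpl. rewrite H1S0; ring. rewrite H1SS; ring. Qed.

Let c := RtoC 1 - a1 * a2.
Let p := a1 + a2 * b1.
Let q := a2 + a1 * b2.
Let r := a1 * a2 - b1 * b2.

Lemma R00 : c * Sm O O = RtoC 1.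
Proof. apply (lc2 _ _ _ _ _ _ (RtoC 1) (RtoC 1) (E0 O) H200). simpl U. unfold c. ring. Qed.

Lemma RS0 : forall i, c * Sm (S i) O = p * Sm i O.
Proof. intro i. apply (lc2 _ _ _ _ _ _ (RtoC 1) (RtoC 0) (ES i O) H200). simpl U. unfold c, p. ring. Qed.

Lemma R0S : forall j, c * Sm O (S j) = q * Sm O j.
Proof. intro j. apply (lc4 _ _ _ _ _ _ _ _ _ _ (RtoC 1) (RtoC 1) (-a2) (RtoC 0) (E0 (S j)) (H20S j) (E0 j) H200).
  simpl U. unfold c, q. ring. Qed.

Lemma RSS : forall i j, c * Sm (S i) (S j) = p * Sm i (S j) + q * Sm (S i) j - r * Sm i j.
Proof. intros i j. apply (lc2 _ _ _ _ _ _ (RtoC 1) (-a2) (ES i (S j)) (ES i j)).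
  simpl U. unfold c, p, q, r. ring. Qed.
Lemma AllRec : c * Sm O O = RtoC 1 /\ (forall i, c * Sm (S i) O = p * Sm i O) /\
  (forall j, c * Sm O (S j) = q * Sm O j) /\
  (forall i j, c * Sm (S i) (S j) = p * Sm i (S j) + q * Sm (S i) j - r * Sm i j).
Proof. split; [apply R00|split; [apply RS0|split; [apply R0S|apply RSS]]]. Qed.
End Gen.

Lemma Cinv_neq0 : forall x, x <> RtoC 0 -> / x <> RtoC 0.
Proof. intros x Hx H. apply C10. rewrite <- (Cinv_l x Hx), H. ring. Qed.

Lemma phi_form : forall g a, g <> RtoC 0 -> a <> RtoC 0 ->
  phi g a = (RtoC 1 - (a*g)*(a*g)*(/a*/a - RtoC 1)) / (a*g).
Proof. intros g a Hg Ha. unfold phi. change Cxdiv with Cdiv; change Cxsub with Cminus;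
  change Cxmul with Cmult; change Cx1 with (RtoC 1). rewrite !e11. simpl Cpow.
  rewrite ?e11. simpl Cpow. toC. field. split; assumption. Qed.

Lemma phi_iff : forall a1 b1 a2 b2, a1 <> RtoC 0 -> a2 <> RtoC 0 ->
  ((RtoC 1 - b1) / a1 = (RtoC 1 - b2) / a2 <-> a1 + a2 * b1 = a2 + a1 * b2).
Proof. intros a1 b1 a2 b2 H1 H2.
  assert (E : (RtoC 1 - b1) / a1 - (RtoC 1 - b2) / a2 = ((a2 + a1*b2) - (a1 + a2*b1)) * / (a1 * a2)).
  { field. split; assumption. }
  split; intro H.
  - rewrite H in E. symmetry. apply Csub_eq. apply (Cmul_cancel (/ (a1*a2))).
    apply Cinv_neq0, Cmul_neq0; assumption. rewrite Cmult_comm, <- E. ring.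
  - apply Csub_eq. rewrite E, H. ring.
Qed.

Theorem mainTheorem1 (g a g' a' : Cx) :
  g <> Cx0 -> a <> Cx0 -> g' <> Cx0 -> a' <> Cx0 ->
  product_abs_conv (Tmat g a) (Tmat g' a') ->
  product_abs_conv (Tmat g' a') (Tmat g a) ->
  (imat_commute (Tmat g a) (Tmat g' a') <-> phi g a = phi g' a').
Proof.
  intros Hg Ha Hg' Ha' Hc1 Hc2. change Cx0 with (RtoC 0) in *.
  assert (Ex1 : forall i j, exists l, sto (fun k => Tmat g a i k * Tmat g' a' k j) l)
    by (intros; apply abs_sto, Hc1).
  assert (Ex2 : forall i j, exists l, sto (fun k => Tmat g' a' i k * Tmat g a k j) l)
    by (intros; apply abs_sto, Hc2).
  pose (Sm := fun i j => proj1_sig (constructive_indefinite_description _ (Ex1 i j))).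
  pose (Rm := fun i j => proj1_sig (constructive_indefinite_description _ (Ex2 i j))).
  assert (HS : forall i j, sto (fun k => Tmat g a i k * Tmat g' a' k j) (Sm i j))
    by (intros; exact (proj2_sig (constructive_indefinite_description _ (Ex1 i j)))).
  assert (HR : forall i j, sto (fun k => Tmat g' a' i k * Tmat g a k j) (Rm i j))
    by (intros; exact (proj2_sig (constructive_indefinite_description _ (Ex2 i j)))).
  clearbody Sm Rm.
  set (a1 := a * g). set (a2 := a' * g').
  set (b1 := a1 * a1 * (/a * /a - RtoC 1)). set (b2 := a2 * a2 * (/a' * /a' - RtoC 1)).
  destruct (AllRec a1 b1 a2 b2 (Tmat g a) (Tmat g' a') (T00 g a) (TS0 g a) (T0S g a) (TSS g a)
    (T00 g' a') (TS0 g' a') (T0S g' a') (TSS g' a') Sm HS) as [S00 [SS0 [S0S SSS]]].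
  destruct (AllRec a2 b2 a1 b1 (Tmat g' a') (Tmat g a) (T00 g' a') (TS0 g' a') (T0S g' a') (TSS g' a')
    (T00 g a) (TS0 g a) (T0S g a) (TSS g a) Rm HR) as [R00' [RS0' [R0S' RSS']]].
  assert (Ha1 : a1 <> RtoC 0) by (apply Cmul_neq0; assumption).
  assert (Ha2 : a2 <> RtoC 0) by (apply Cmul_neq0; assumption).
  rewrite (phi_form g a), (phi_form g' a') by assumption. fold a1 a2 b1 b2.
  rewrite (phi_iff _ _ _ _ Ha1 Ha2).
  assert (Hc : RtoC 1 - a1 * a2 <> RtoC 0).
  { intro H. rewrite H in S00. apply C10. rewrite <- S00. ring. }
  split.
  - intro H.
    assert (Seq : forall i j, Sm i j = Rm i j).
    { intros i j. destruct (H i j) as [l [h1 h2]]. apply sto_iff in h1; apply sto_iff in h2.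
      transitivity l; [eapply sto_unique; [apply HS|exact h1] | symmetry; eapply sto_unique; [apply HR|exact h2]]. }
    assert (E1 : (RtoC 1 - a1*a2) * Sm 1%nat O = (a2 + a1*b2) * Sm O O).
    { rewrite !Seq. rewrite <- (RS0' O). ring. }
    rewrite SS0 in E1.
    assert (HS0 : Sm O O <> RtoC 0).
    { intro H0. rewrite H0 in S00. apply C10. rewrite <- S00. ring. }
    apply Csub_eq. apply (Cmul_cancel (Sm O O)). exact HS0.
    rewrite Cmult_comm. transitivity ((a1 + a2 * b1) * Sm O O - (a2 + a1 * b2) * Sm O O). ring.
    rewrite E1. ring.
  - intro Hpq.
    assert (Seq : forall i j, Sm i j = Rm i j).
    { induction i as [|i IHi]; induction j as [|j IHj].
      - apply (Cmul_reg _ _ _ Hc). rewrite S00. transitivity ((RtoC 1 - a2*a1) * Rm O O). symmetry; exact R00'. ring.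
      - apply (Cmul_reg _ _ _ Hc). rewrite S0S, IHj. transitivity ((RtoC 1 - a2 * a1) * Rm O (S j)).
        rewrite R0S', Hpq. ring. ring.
      - apply (Cmul_reg _ _ _ Hc). rewrite SS0, IHi. transitivity ((RtoC 1 - a2 * a1) * Rm (S i) O).
        rewrite RS0', Hpq. ring. ring.
      - apply (Cmul_reg _ _ _ Hc). rewrite SSS, IHi, IHi, IHj. transitivity ((RtoC 1 - a2 * a1) * Rm (S i) (S j)).
        rewrite RSS', Hpq. ring. ring. }
    intros i j. exists (Sm i j). split; apply sto_iff; [apply HS| rewrite Seq; apply HR].
Qed.
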